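(* There exists a constant $\eta>0$ such that for every line $H_1\in\mathcal H$ and every $R>0$, $$G(H_1):=\int_{\mathcal H^2}\mathbf 1\{c(H_1,H_2,H_3)\in B(0,R)\}\,\Lambda(\mathrm dH_2)\Lambda(\mathrm dH_3)\le \eta R^2.$$
   Context: $\mathcal H$ is the set of lines in $\mathbb{R}^2$, and $\Lambda$ is the translation- and rotation-invariant measure on $\mathcal H$ normalized so that the lines meeting the unit disk have measure $2$; equivalently $\int_{\mathcal H}f(H)\Lambda(\mathrm dH)=\int_{S^1}\int_0^\infty f(H(r,u))\,\mathrm dr\,\sigma(\mathrm du)$, where $H(r,u)$ is the line at distance $r$ from the origin with unit normal $u$, and $\sigma$ is the rotation-invariant measure on $S^1$ with $\sigma(S^1)=2$. For three lines $H_1,H_2,H_3$ in general position, $\Delta(H_1,H_2,H_3)$ denotes the unique triangle formed by them, and $c(H_1,H_2,H_3)$ is the incenter of this triangle (the integrand is defined for $\Lambda^2$-a.e. $(H_2,H_3)$). $B(0,R)$ is the closed disk of radius $R$ centered at the origin. *)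

(* Defs.v *)
From Stdlib Require Import Reals Lra.
Open Scope R_scope.

(* ---------- Lines in R^2 ----------
   A line is encoded by a pair (r, t) : R * R and denotes
     H(r, u(t)) = { x in R^2 | <x, u(t)> = r },  u(t) = (cos (PI t), sin (PI t)).
   With r >= 0 and t in [0,2) every line is obtained; the invariant measure
   Lambda of the paper (sigma(S^1) = 2) becomes, in coordinates (r,t) with
   r in [0,oo), t in [0,2), exactly Lebesgue measure dr dt
   (since sigma(du) = d(theta)/PI = dt for theta = PI t). *)
Definition line := (R * R)%type.
Definition ldist (H : line) : R := fst H.
Definition lnx (H : line) : R := cos (PI * snd H).
Definition lny (H : line) : R := sin (PI * snd H).

Definition pt := (R * R)%type.
Definition on_line (H : line) (p : pt) : Prop :=
  lnx H * fst p + lny H * snd p = ldist H.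

Definition ldet (H K : line) : R := lnx H * lny K - lny H * lnx K.

(* intersection point of two non-parallel lines (Cramer's rule) *)
Definition linter (H K : line) : pt :=
  ((ldist H * lny K - ldist K * lny H) / ldet H K,
   (lnx H * ldist K - lnx K * ldist H) / ldet H K).

Definition gen_pos (H1 H2 H3 : line) : Prop :=
  ldet H1 H2 <> 0 /\ ldet H1 H3 <> 0 /\ ldet H2 H3 <> 0 /\
  linter H1 H2 <> linter H1 H3.

Definition pdist (p q : pt) : R :=
  sqrt ((fst p - fst q) ^ 2 + (snd p - snd q) ^ 2).

(* incenter of the triangle Delta(H1,H2,H3): with vertices A,B,C and
   opposite side lengths a,b,c, the incenter is (aA + bB + cC)/(a+b+c). *)
Definition incenter (H1 H2 H3 : line) : pt :=
  let A := linter H2 H3 in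
  let B := linter H1 H3 in
  let C := linter H1 H2 in
  let a := pdist B C in
  let b := pdist A C in
  let c := pdist A B in
  ((a * fst A + b * fst B + c * fst C) / (a + b + c),
   (a * snd A + b * snd B + c * snd C) / (a + b + c)).

Definition in_ball (R0 : R) (p : pt) : Prop := fst p ^ 2 + snd p ^ 2 <= R0 ^ 2.

(* ---------- Lebesgue outer measure in R^d ----------
   Points of R^d are functions nat -> R (only the first d coordinates matter).
   A box is given by lower/upper corners. *)
Definition in_box (d : nat) (lo hi x : nat -> R) : Prop :=
  forall i, (i < d)%nat -> lo i <= x i <= hi i.

Fixpoint box_vol (d : nat) (lo hi : nat -> R) : R :=
  match d with
  | O => 1
  | S k => box_vol k lo hi * (hi k - lo k)
  end.

(* "lambda_d^*(A) <= c": the Lebesgue outer measure of A (infimum of total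
   volumes of countable box covers) is at most c. *)
Definition leb_outer_le (d : nat) (A : (nat -> R) -> Prop) (c : R) : Prop :=
  forall eps, 0 < eps ->
  exists lo hi : nat -> nat -> R,
    (forall n i, (i < d)%nat -> lo n i <= hi n i) /\
    (forall x, A x -> exists n, in_box d (lo n) (hi n) x) /\
    (forall N, sum_f_R0 (fun n => box_vol d (lo n) (hi n)) N <= c + eps).

(* The set of pairs (H2,H3), in coordinates x = (r2,t2,r3,t3) with
   r >= 0, 0 <= t < 2, such that (H1,H2,H3) is in general position and
   c(H1,H2,H3) lies in B(0,R). Its Lambda^2-measure is the integral G(H1). *)
Definition G_set (H1 : line) (R0 : R) (x : nat -> R) : Prop :=
  0 <= x 0%nat /\ 0 <= x 1%nat < 2 /\ 0 <= x 2%nat /\ 0 <= x 3%nat < 2 /\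
  let H2 := (x 0%nat, x 1%nat) in
  let H3 := (x 2%nat, x 3%nat) in
  gen_pos H1 H2 H3 /\ in_ball R0 (incenter H1 H2 H3).

(* Main.v *)
Require Import Defs.
From Stdlib Require Import Reals.
From Stdlib Require Import Lra Lia.
Open Scope R_scope.

Definition fl (H : line) (p : pt) : R := lnx H * fst p + lny H * snd p - ldist H.

Lemma unit_n (H : line) : lnx H ^ 2 + lny H ^ 2 = 1.
Proof. unfold lnx, lny. pose proof (sin2_cos2 (PI * snd H)). unfold Rsqr in H0. lra. Qed.

Lemma linter_on (H K : line) : ldet H K <> 0 ->
  fl H (linter H K) = 0 /\ fl K (linter H K) = 0.
Proof.
  intros D. unfold fl, linter, ldet in *; simpl. split; field; exact D.
Qed.

Definition cross (P Q X : pt) : R :=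
  (fst Q - fst P) * (snd X - snd P) - (snd Q - snd P) * (fst X - fst P).

Lemma key (H : line) (P Q X : pt) : fl H P = 0 -> fl H Q = 0 ->
  pdist P Q * Rabs (fl H X) = Rabs (cross P Q X).
Proof.
  intros HP HQ. pose proof (unit_n H) as U. unfold fl, cross, pdist in *.
  set (c := lnx H) in *. set (s := lny H) in *.
  set (dx := fst Q - fst P). set (dy := snd Q - snd P).
  assert (E1 : c * dx + s * dy = 0) by (unfold dx, dy; lra).
  assert (Hs0 : (fst P - fst Q) ^ 2 + (snd P - snd Q) ^ 2 = dx^2 + dy^2) by (unfold dx, dy; ring).
  replace (c * fst X + s * snd X - ldist H) with (c * (fst X - fst P) + s * (snd X - snd P)) by lra.
  rewrite Hs0. fold dx dy. clearbody c s dx dy.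
  remember (c * dy - s * dx) as l eqn:El.
  assert (Ex : dx = - s * l).
  { rewrite El. transitivity (c*(c*dx+s*dy) - s*(c*dy-s*dx) + dx*(1-(c^2+s^2))); [ring|].
    rewrite E1, U. ring. }
  assert (Ey : dy = c * l).
  { rewrite El. transitivity (s*(c*dx+s*dy) + c*(c*dy-s*dx) + dy*(1-(c^2+s^2))); [ring|].
    rewrite E1, U. ring. }
  assert (Hs : dx ^ 2 + dy ^ 2 = Rsqr l).
  { rewrite Ex, Ey. unfold Rsqr. transitivity (l*l*(c^2+s^2)); [ring|]. rewrite U; ring. }
  rewrite Hs, sqrt_Rsqr_abs, <- Rabs_mult.
  replace (dx * (snd X - snd P) - dy * (fst X - fst P)) with (- (l * (c * (fst X - fst P) + s * (snd X - snd P)))).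
  - rewrite Rabs_Ropp. reflexivity.
  - rewrite Ex, Ey. ring.
Qed.

Lemma pdist_nonneg P Q : 0 <= pdist P Q.
Proof. apply sqrt_pos. Qed.

Lemma pdist_pos P Q : P <> Q -> 0 < pdist P Q.
Proof.
  intros NE. destruct (Rle_lt_or_eq_dec _ _ (pdist_nonneg P Q)) as [h|h]; auto.
  exfalso. unfold pdist in h. symmetry in h.
  apply sqrt_eq_0 in h; [|apply Rplus_le_le_0_compat; apply pow2_ge_0].
  apply NE. destruct P as [p1 p2], Q as [q1 q2]; simpl in *.
  pose proof (pow2_ge_0 (p1 - q1)). pose proof (pow2_ge_0 (p2 - q2)).
  assert (e1 : (p1 - q1)^2 = 0) by lra. assert (e2 : (p2 - q2)^2 = 0) by lra.
  destruct (Req_dec (p1 - q1) 0) as [z1|z1]; [|exfalso; exact (pow_nonzero _ 2 z1 e1)].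
  destruct (Req_dec (p2 - q2) 0) as [z2|z2]; [|exfalso; exact (pow_nonzero _ 2 z2 e2)].
  f_equal; lra.
Qed.

Lemma combo (HH : line) (A B C : pt) (a b c : R) : a + b + c <> 0 ->
  fl HH ((a * fst A + b * fst B + c * fst C) / (a + b + c),
         (a * snd A + b * snd B + c * snd C) / (a + b + c)) * (a + b + c)
  = a * fl HH A + b * fl HH B + c * fl HH C.
Proof. intros. unfold fl; simpl. field. exact H. Qed.

Lemma incenter_eq (H1 H2 H3 : line) : gen_pos H1 H2 H3 ->
  Rabs (fl H1 (incenter H1 H2 H3)) = Rabs (fl H2 (incenter H1 H2 H3)) /\
  Rabs (fl H1 (incenter H1 H2 H3)) = Rabs (fl H3 (incenter H1 H2 H3)).
Proof.
  intros [D12 [D13 [D23 NE]]].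
  destruct (linter_on _ _ D23) as [A2 A3].
  destruct (linter_on _ _ D13) as [B1 B3].
  destruct (linter_on _ _ D12) as [C1 C2].
  set (A := linter H2 H3) in *. set (B := linter H1 H3) in *. set (C := linter H1 H2) in *.
  assert (Ha : 0 < pdist B C) by (apply pdist_pos; intro e; apply NE; fold B C; now rewrite e).
  pose proof (pdist_nonneg A C). pose proof (pdist_nonneg A B).
  set (a := pdist B C) in *. set (b := pdist A C) in *. set (c := pdist A B) in *.
  set (S := a + b + c).
  assert (SP : 0 < S) by (unfold S; lra).
  assert (F : forall HH, fl HH (incenter H1 H2 H3) * S = a * fl HH A + b * fl HH B + c * fl HH C).
  { intros HH. unfold incenter. fold A B C a b c. apply combo. unfold S in SP. lra. }
  assert (K1 := key H1 B C A B1 C1). assert (K2 := key H2 A C B A2 C2).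
  assert (K3 := key H3 A B C A3 B3). fold a b c in K1, K2, K3.
  assert (X1 : cross A C B = - cross B C A) by (unfold cross; ring).
  assert (X2 : cross A B C = cross B C A) by (unfold cross; ring).
  rewrite X1, Rabs_Ropp in K2. rewrite X2 in K3.
  assert (G1 := F H1). assert (G2 := F H2). assert (G3 := F H3).
  rewrite B1, C1 in G1. rewrite A2, C2 in G2. rewrite A3, B3 in G3.
  assert (R1 : Rabs (fl H1 (incenter H1 H2 H3)) * S = Rabs (cross B C A)).
  { rewrite <- (Rabs_pos_eq S) by lra. rewrite <- Rabs_mult, G1, <- K1.
    rewrite Rmult_0_r, Rmult_0_r, !Rplus_0_r, Rabs_mult, (Rabs_pos_eq a) by lra. reflexivity. }
  assert (R2 : Rabs (fl H2 (incenter H1 H2 H3)) * S = Rabs (cross B C A)).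
  { rewrite <- (Rabs_pos_eq S) by lra. rewrite <- Rabs_mult, G2, <- K2.
    rewrite Rmult_0_r, Rmult_0_r, Rplus_0_r, Rplus_0_l, Rabs_mult, (Rabs_pos_eq b) by lra. reflexivity. }
  assert (R3 : Rabs (fl H3 (incenter H1 H2 H3)) * S = Rabs (cross B C A)).
  { rewrite <- (Rabs_pos_eq S) by lra. rewrite <- Rabs_mult, G3, <- K3.
    rewrite Rmult_0_r, Rmult_0_r, !Rplus_0_l, Rabs_mult, (Rabs_pos_eq c) by lra. reflexivity. }
  split; apply (Rmult_eq_reg_r S); try lra; congruence.
Qed.

Lemma proj_bound (H : line) (I : pt) (R0 : R) : 0 < R0 -> in_ball R0 I ->
  - R0 <= lnx H * fst I + lny H * snd I <= R0.
Proof.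
  intros Rp B. unfold in_ball in B. pose proof (unit_n H) as U.
  set (p := lnx H * fst I + lny H * snd I).
  assert (p ^ 2 <= R0 ^ 2).
  { unfold p. pose proof (pow2_ge_0 (lnx H * snd I - lny H * fst I)).
    assert ((lnx H * fst I + lny H * snd I)^2 + (lnx H * snd I - lny H * fst I)^2
      = (lnx H ^2 + lny H ^2) * (fst I ^2 + snd I ^2)) by ring.
    rewrite U in H1. lra. }
  split; nra.
Qed.

Lemma lin_bound (r1 p q r2 R0 : R) : 0 < R0 -> -R0 <= p <= R0 -> -R0 <= q <= R0 -> 0 <= r2 ->
  Rabs (p - r1) = Rabs (q - r2) ->
  Rmax 0 (Rabs r1 - 2*R0) <= r2 <= Rmax 0 (Rabs r1 - 2*R0) + 4*R0.
Proof.
  intros. unfold Rmax.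
  destruct (Rle_dec 0 (Rabs r1 - 2*R0));
  destruct (Rle_or_lt 0 r1) as [h1|h1];
  [rewrite (Rabs_pos_eq r1) in * by lra | rewrite (Rabs_left1 r1) in * by lra
  |rewrite (Rabs_pos_eq r1) in * by lra | rewrite (Rabs_left1 r1) in * by lra];
  (destruct (Rle_or_lt 0 (p - r1)) as [h2|h2];
  [rewrite (Rabs_pos_eq (p - r1)) in * by lra | rewrite (Rabs_left1 (p - r1)) in * by lra]);
  (destruct (Rle_or_lt 0 (q - r2)) as [h3|h3];
  [rewrite (Rabs_pos_eq (q - r2)) in * by lra | rewrite (Rabs_left1 (q - r2)) in * by lra]);
  lra.
Qed.

Definition lo0 (a : R) (i : nat) : R :=
  match i with 0%nat => a | 1%nat => 0 | 2%nat => a | _ => 0 end.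
Definition hi0 (a R0 : R) (i : nat) : R :=
  match i with 0%nat => a + 4 * R0 | 1%nat => 2 | 2%nat => a + 4 * R0 | _ => 2 end.

Theorem lemma3p2 :
  exists eta : R, 0 < eta /\
    forall (H1 : line) (R0 : R), 0 < R0 ->
      leb_outer_le 4 (G_set H1 R0) (eta * R0 ^ 2).
Proof.
  exists 64. split; [lra|].
  intros H1 R0 Rp eps Hе.
  set (a := Rmax 0 (Rabs (ldist H1) - 2*R0)).
  assert (a0 : 0 <= a) by apply Rmax_l.
  exists (fun n => match n with O => lo0 a | _ => fun _ => 0 end).
  exists (fun n => match n with O => hi0 a R0 | _ => fun _ => 0 end).
  split; [|split].
  - intros [|n] i Hi; [|lra].
    destruct i as [|[|[|[|i]]]]; simpl; lra.
  - intros x Gx. exists O. destruct Gx as [x0 [x1 [x2 [x3 [GP IB]]]]].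
    destruct (incenter_eq _ _ _ GP) as [E2 E3].
    set (I := incenter H1 (x 0%nat, x 1%nat) (x 2%nat, x 3%nat)) in *.
    pose proof (proj_bound H1 I R0 Rp IB) as P1.
    pose proof (proj_bound (x 0%nat, x 1%nat) I R0 Rp IB) as P2.
    pose proof (proj_bound (x 2%nat, x 3%nat) I R0 Rp IB) as P3.
    unfold fl in E2, E3. unfold ldist in E2 at 2. unfold ldist in E3 at 2. simpl in E2, E3.
    assert (B2 := lin_bound _ _ _ _ _ Rp P1 P2 x0 E2).
    assert (B3 := lin_bound _ _ _ _ _ Rp P1 P3 x2 E3).
    fold a in B2, B3.
    intros i Hi. destruct i as [|[|[|[|i]]]]; simpl; try lra. lia.
  - intros N. induction N as [|N IH].
    + simpl. unfold hi0, lo0. nra.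
    + simpl. simpl in IH. lra.
Qed.
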